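(* Let $X_1,\dots,X_m\subseteq\mathbb{R}^d$ be a family of nonempty finite sets in general position and let $n\ge1$ be an integer. Then there exists $\delta>0$ such that the following holds: if $X_1^{(n)}$ is obtained from $X_1$ by replacing each point $x\in X_1$ by a set (cloud) of $n$ points each within distance $\delta$ of $x$, in such a way that the family $X_1^{(n)},X_2,\dots,X_m$ is in general position, then \[ c(X_1,\dots,X_m)=c(X_1^{(n)},X_2,\dots,X_m). \]
   Context: A family of finite sets $X_1,\dots,X_m\subseteq\mathbb{R}^d$ is in general position if the sets are pairwise disjoint and their union is a set of points in general position. Sets $Y_1,\dots,Y_{d+1}\subseteq\mathbb{R}^d$ have the same-type property if for every choice $y_1\in Y_1,\dots,y_{d+1}\in Y_{d+1}$ the orientation of $(y_1,\dots,y_{d+1})$ is the same; sets $Y_1,\dots,Y_m$ have the same-type property if every $d+1$ of them do. For a family $X_1,\dots,X_m$ of nonempty finite sets in general position, $c(X_1,\dots,X_m)$ is the largest $c$ such that there exist $Y_i\subseteq X_i$ with the same-type property and $|Y_i|\ge c|X_i|$ for all $i$. *)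

(* Defs.v *)
From HB Require Import structures.
From mathcomp Require Import all_boot all_order all_algebra.
From mathcomp Require Import finmap.
From mathcomp Require Import boolp classical_sets reals.
Set Implicit Arguments. Unset Strict Implicit. Unset Printing Implicit Defensive.
Import Order.TTheory GRing.Theory Num.Theory.
Local Open Scope ring_scope.
Local Open Scope fset_scope.

Section Defs.
Variables (R : realType) (d : nat).
Notation pt := 'rV[R]_d.

Definition edist (x y : pt) : R := Num.sqrt (\sum_(k < d) (x 0 k - y 0 k) ^+ 2).

(* orientation of (y_1, ..., y_{d+1}): sign of det of the (d+1)x(d+1) matrix
   whose i-th row is (1, y_i) *)
Definition orient (y : 'I_d.+1 -> pt) : R :=
  Num.sg (\det (\matrix_(i < d.+1, j < d.+1)
     match unlift ord0 j with None => 1 | Some k => y i 0 k end)).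

(* a finite point set is in general position: no d+1 distinct points of it
   lie on a common affine hyperplane *)
Definition gen_pos_pts (P : {fset pt}) : Prop :=
  forall y : 'I_d.+1 -> pt, injective y -> (forall j, y j \in P) -> orient y != 0.

Definition gen_pos_family (k : nat) (X : 'I_k -> {fset pt}) : Prop :=
  (forall i j, i != j -> fdisjoint (X i) (X j)) /\
  gen_pos_pts (\big[fsetU/fset0]_(i < k) X i).

Definition same_type_dp1 (Y : 'I_d.+1 -> {fset pt}) : Prop :=
  forall y y' : 'I_d.+1 -> pt, (forall j, y j \in Y j) -> (forall j, y' j \in Y j) ->
    orient y = orient y'.

Definition same_type (k : nat) (Y : 'I_k -> {fset pt}) : Prop :=
  forall f : 'I_d.+1 -> 'I_k, injective f -> same_type_dp1 (fun j => Y (f j)).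

(* c(X_1, ..., X_k): the largest c such that there are Y_i ⊆ X_i with the
   same-type property and |Y_i| >= c |X_i| for all i (for nonempty X_i this
   set of admissible c is nonempty, bounded above by 1, and its supremum is
   attained, there being finitely many choices of the Y_i) *)
Definition cval (k : nat) (X : 'I_k -> {fset pt}) : R :=
  sup [set c : R | exists Y : 'I_k -> {fset pt},
        (forall i, Y i `<=` X i) /\ same_type Y /\
        (forall i, c * #|` X i|%:R <= #|` Y i|%:R)].

End Defs.

(* Main.v *)
Require Import Defs.
From HB Require Import structures.
From mathcomp Require Import all_boot all_order all_algebra.
From mathcomp Require Import finmap.
From mathcomp Require Import boolp classical_sets reals.
From mathcomp Require Import lra.
Import Order.TTheory GRing.Theory Num.Theory.
Local Open Scope ring_scope.
Local Open Scope fset_scope.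

Section Aux.
Variables (R : realType) (d : nat).
Notation pt := 'rV[R]_d.

Definition omat (y : 'I_d.+1 -> pt) : 'M[R]_d.+1 :=
  \matrix_(i < d.+1, j < d.+1)
     match unlift ord0 j with None => 1 | Some k => y i 0 k end.

Lemma orientE y : orient y = Num.sg (\det (omat y)).
Proof. by []. Qed.

Definition upd (y : 'I_d.+1 -> pt) j0 (c : pt) := fun j => if j == j0 then c else y j.

Lemma sg_close (a b : R) : `|b - a| < `|a| -> Num.sg b = Num.sg a.
Proof.
move=> h.
have [a0|a0|a0] := ltrgtP a 0.
- rewrite (ltr0_norm a0) in h; rewrite (ltr0_sg a0) ltr0_sg //.
  move: h; rewrite ltr_norml => /andP[_ h]; lra.
- rewrite (gtr0_norm a0) in h; rewrite (gtr0_sg a0) gtr0_sg //.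
  move: h; rewrite ltr_norml => /andP[h _]; lra.
- by move: h; rewrite a0 normr0 ltNge normr_ge0.
Qed.

Lemma perturb (y : 'I_d.+1 -> pt) j0 : orient y != 0 ->
  exists2 e : R, 0 < e & forall c : pt, (forall k, `|c 0 k - y j0 0 k| <= e) ->
    orient (upd y j0 c) = orient y.
Proof.
rewrite orientE sgr_eq0 => hD.
set S := \sum_k `|cofactor (omat y) j0 k|.
have S0 : 0 <= S by apply: sumr_ge0 => k _; exact: normr_ge0.
have D0 : 0 < `|\det (omat y)| by rewrite normr_gt0.
exists (`|\det (omat y)| / (S + 1)).
  by apply: divr_gt0 => //; lra.
move=> c hc; rewrite !orientE; apply: sg_close.
have cofE k : cofactor (omat (upd y j0 c)) j0 k = cofactor (omat y) j0 k.
  rewrite /cofactor; congr (_ * _); congr (\det _).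
  apply/matrixP => a b; rewrite !mxE /upd.
  by rewrite eq_sym (negPf (neq_lift j0 a)).
rewrite (expand_det_row _ j0) [X in _ - X](expand_det_row _ j0).
rewrite -sumrB.
set e := `|\det (omat y)| / (S + 1).
apply: (le_lt_trans (ler_norm_sum _ _ _)).
apply: (@le_lt_trans _ _ (e * S)).
  rewrite /S mulr_sumr; apply: ler_sum => k _.
  rewrite cofE -mulrBl normrM ler_wpM2r //.
  rewrite !mxE /upd eqxx.
  case: (unlift ord0 k) => [k'|]; last by rewrite subrr normr0; apply: ltW; apply: divr_gt0 => //; lra.
  exact: hc.
rewrite /e -mulrA gtr_pMr //.
rewrite ltr_pdivrMl; last lra.
lra.
Qed.


Lemma fin_min (T : finType) (P : T -> R -> Prop) :
  (forall t e e', P t e -> 0 < e' <= e -> P t e') ->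
  (forall t, exists2 e, 0 < e & P t e) -> exists2 e, 0 < e & forall t, P t e.
Proof.
move=> mono h.
suff: forall s : seq T, exists2 e, 0 < e & forall t, t \in s -> P t e.
  by case/(_ (enum T)) => e e0 he; exists e => // t; apply: he; rewrite mem_enum.
elim=> [|a s [e e0 he]]; first by exists 1.
have [ea ea0 hea] := h a.
exists (Num.min e ea); first by rewrite lt_min e0 ea0.
move=> t; rewrite inE => /orP[/eqP->|ts].
  by apply: mono hea _; rewrite lt_min e0 ea0 ge_min lexx orbT.
by apply: mono (he _ ts) _; rewrite lt_min e0 ea0 ge_min lexx.
Qed.

Lemma edist_coord (y x : pt) e k : edist y x <= e -> `|y 0 k - x 0 k| <= e.
Proof.
rewrite /edist => h; apply: le_trans h.
rewrite -sqrtr_sqr ler_sqrt; last by apply: sumr_ge0 => i _; exact: sqr_ge0.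
by rewrite (bigD1 k) //= lerDl; apply: sumr_ge0 => i _; exact: sqr_ge0.
Qed.


Lemma card_clouds (C : pt -> {fset pt}) (A : {fset pt}) n :
  (forall x, x \in A -> #|` C x| = n) ->
  (forall x x', x \in A -> x' \in A -> x != x' -> [disjoint C x & C x']) ->
  forall s : seq pt, uniq s -> {subset s <= A} ->
  #|` \big[fsetU/fset0]_(x <- s) C x| = (n * size s)%N.
Proof.
move=> hc hd; elim=> [|a s IH] /=; first by rewrite big_nil muln0.
move=> /andP[aS us] sA.
have sA' : {subset s <= A} by move=> x xs; apply: sA; rewrite inE xs orbT.
have aA : a \in A by apply: sA; rewrite inE eqxx.
rewrite big_cons cardfsU IH // hc //.
have -> : C a `&` \big[fsetU/fset0]_(x <- s) C x = fset0.
  apply/eqP; apply/fdisjointP => y yC; apply/negP => /bigfcupP [x /andP[xs _] yx].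
  have : [disjoint C a & C x] by apply: hd => //; [exact: sA' | apply: contraNneq aS => ->].
  by move/fdisjointP/(_ _ yC); rewrite yx.
by rewrite cardfs0 subn0 mulnS.
Qed.

End Aux.
Arguments upd {R d}.
Arguments perturb {R d}.
Arguments fin_min {R T}.
Arguments edist_coord {R d}.
Arguments card_clouds {R d}.
Arguments orientE {R d}.

Theorem lemma3 (R : realType) (d m : nat) (X : 'I_m.+1 -> {fset 'rV[R]_d})
    (n : nat) :
  (forall i, X i != fset0) -> gen_pos_family X -> (1 <= n)%N ->
  exists delta : R, 0 < delta /\
    forall C : 'rV[R]_d -> {fset 'rV[R]_d},
      (forall x, x \in X ord0 ->
         #|` C x| = n /\ (forall y, y \in C x -> edist y x <= delta)) ->
      let X1n := \big[fsetU/fset0]_(x <- X ord0) C x in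
      let Xn := fun i : 'I_m.+1 => if i == ord0 then X1n else X i in
      gen_pos_family Xn ->
      cval X = cval Xn.
Proof.
move=> _ [hdis hgp] hn.
set U := \big[fsetU/fset0]_(i < m.+1) X i.
have inU i z : z \in X i -> z \in U.
  by move=> hz; apply/bigfcupP; exists i => //; rewrite mem_index_enum.
pose P1 (t : {ffun 'I_d.+1 -> U} * 'I_d.+1) (e : R) :=
  let z := fun j => val (t.1 j) in injective z ->
  forall c : 'rV[R]_d, (forall k, `|c 0 k - z t.2 0 k| <= e) ->
  orient (upd z t.2 c) = orient z.
have [e1 e10 he1] : exists2 e, 0 < e & forall t, P1 t e.
  apply: fin_min.
    move=> t e e' h /andP[_ ee']; rewrite /P1 /= in h *; move=> zi c hc.
    apply: h => // k.
    exact: le_trans (hc k) ee'.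
  move=> t; case: (pselect (injective (fun j => val (t.1 j)))) => zi; last first.
    by exists 1 => //.
  have : orient (fun j => val (t.1 j)) != 0.
    by apply: hgp => // j; exact: valP.
  by case/(perturb _ t.2) => e e0 he; exists e => //; rewrite /P1 /= => _ c hc; apply: he.
pose P2 (t : X ord0 * X ord0) (e : R) := val t.1 != val t.2 ->
  exists k, 2 * e < `|val t.1 0 k - val t.2 0 k|.
have [e2 e20 he2] : exists2 e, 0 < e & forall t, P2 t e.
  apply: fin_min.
    move=> t e e' h /andP[_ ee'] ne; case: (h ne) => k hk; exists k.
    by apply: le_lt_trans hk; rewrite ler_pM2l.
  move=> t; case: (boolP (val t.1 != val t.2)) => ne; last by exists 1 => //; rewrite /P2 => h; rewrite h in ne.
  have [k hk] : exists k, val t.1 0 k != val t.2 0 k.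
    apply/existsP; apply: contraNT ne; rewrite negb_exists => /forallP h.
    by apply/eqP/rowP => k; apply/eqP; move/negPn: (h k).
  exists (`|val t.1 0 k - val t.2 0 k| / 3).
    by apply: divr_gt0 => //; rewrite normr_gt0 subr_eq0.
  move=> _; exists k.
  have : 0 < `|val t.1 0 k - val t.2 0 k| by rewrite normr_gt0 subr_eq0.
  lra.
exists (Num.min e1 e2); split; first by rewrite lt_min e10 e20.
move=> C hC X1n Xn _.
have hCc x y : x \in X ord0 -> y \in C x -> forall k, `|y 0 k - x 0 k| <= Num.min e1 e2.
  by move=> xX yC k; apply: edist_coord; apply: (hC x xX).2.
have Cd x x' : x \in X ord0 -> x' \in X ord0 -> x != x' -> [disjoint C x & C x'].
  move=> xX x'X ne; apply/fdisjointP => y yx; apply/negP => yx'.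
  have [k hk] := he2 ([` xX], [` x'X]) ne.
  move: hk => /=.
  have h1 := hCc _ _ xX yx k; have h2 := hCc _ _ x'X yx' k.
  have := ler_distD (y 0 k) (x 0 k) (x' 0 k).
  rewrite (distrC (x 0 k) (y 0 k)).
  have : Num.min e1 e2 <= e2 by rewrite ge_min lexx orbT.
  lra.
have hT (z : 'I_d.+1 -> 'rV[R]_d) : injective z -> (forall j, z j \in U) ->
    forall j0 c, z j0 \in X ord0 -> c \in C (z j0) -> orient (upd z j0 c) = orient z.
  move=> zi zU j0 c zX cC.
  have := he1 ([ffun j => [` zU j]], j0).
  rewrite /P1 /=.
  have E : (fun j => val ([ffun j => [` zU j]] j)) = z by apply: funext => j; rewrite ffunE.
  rewrite E; apply => // k.
  rewrite ffunE /=.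
  apply: le_trans (hCc _ _ zX cC k) _; rewrite ge_min lexx //.
have injF (f : 'I_d.+1 -> 'I_m.+1) (z : 'I_d.+1 -> 'rV[R]_d) :
    injective f -> (forall j, z j \in X (f j)) -> injective z.
  move=> fi hz a b eab; apply: fi; apply/eqP; apply: contraT => ne.
  have := hdis _ _ ne; move/fdisjointP/(_ _ (hz a)); rewrite eab hz //.
have cardU (A : {fset 'rV[R]_d}) : A `<=` X ord0 ->
    #|` \big[fsetU/fset0]_(x <- A) C x| = (n * #|` A|)%N.
  move=> AX; apply: (card_clouds C (X ord0)).
  - by move=> x xA; apply: (hC x xA).1.
  - exact: Cd.
  - exact: fset_uniq.
  - by move=> x xA; apply: (fsubsetP AX).
have fj0 (f : 'I_d.+1 -> 'I_m.+1) j j0 : injective f -> f j0 = ord0 -> j != j0 -> (f j == ord0) = false.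
  by move=> fi h ne; apply/negP => /eqP; rewrite -h => /fi /eqP; rewrite (negPf ne).
have updK (y : 'I_d.+1 -> 'rV[R]_d) j0 x : upd (upd y j0 x) j0 (y j0) = y.
  by apply: funext => j; rewrite /upd; case: eqP => [->|].
have updE (y : 'I_d.+1 -> 'rV[R]_d) j0 : upd y j0 (y j0) = y.
  by apply: funext => j; rewrite /upd; case: eqP => [->|].
rewrite /cval; congr sup; apply/seteqP; split => c /= [Y [hYs [hYst hYc]]].
- pose Y' := fun i : 'I_m.+1 => if i == ord0 then \big[fsetU/fset0]_(x <- Y ord0) C x else Y i.
  exists Y'; split; [|split].
  + move=> i; rewrite /Y' /Xn; case: eqP => _ //.
    apply/fsubsetP => y /bigfcupP [x /andP[xY _] yx]; apply/bigfcupP; exists x => //.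
    by rewrite (fsubsetP (hYs ord0)).
  + move=> f fi.
    suff H : forall y, (forall j, y j \in Y' (f j)) ->
        exists2 z, (forall j, z j \in Y (f j)) & orient y = orient z.
      move=> y y' hy hy'; have [z hz ->] := H y hy; have [z' hz' ->] := H y' hy'.
      exact: (hYst f fi z z' hz hz').
    move=> y hy.
    case: (pselect (exists j0, f j0 = ord0)) => [[j0 hj0]|nj]; last first.
      exists y => // j; move: (hy j); rewrite /Y'; case: eqP => // h.
      by case: nj; exists j.
    move: (hy j0); rewrite /Y' hj0 eqxx => /bigfcupP [x /andP[xY _] yx].
    have hz : forall j, upd y j0 x j \in Y (f j).
      move=> j; rewrite /upd; case: eqP => [->|/eqP ne]; first by rewrite hj0.
      by move: (hy j); rewrite /Y' (fj0 _ _ _ fi hj0 ne).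
    exists (upd y j0 x) => //.
    have zX : forall j, upd y j0 x j \in X (f j) by move=> j; apply: (fsubsetP (hYs _)).
    rewrite -{1}(updK y j0 x); apply: hT.
    * exact: injF fi zX.
    * by move=> j; apply: inU (zX j).
    * by move: (zX j0); rewrite hj0.
    * by rewrite /upd eqxx.
  + move=> i; case: (eqVneq i ord0) => [->|ne]; rewrite /Y' /Xn ?eqxx ?(negPf ne); last exact: hYc.
    rewrite /X1n cardU // cardU ?fsubset_refl // !natrM mulrCA.
    by rewrite ler_wpM2l // hYc.
- pose Y0 := [fset x in X ord0 | C x `&` Y ord0 != fset0].
  pose Y' := fun i : 'I_m.+1 => if i == ord0 then Y0 else Y i.
  have hY's : forall i, Y' i `<=` X i.
    move=> i; rewrite /Y'; case: eqP => [->|/eqP ne].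
      by apply/fsubsetP => x; rewrite inE => /andP[].
    by move: (hYs i); rewrite /Xn (negPf ne).
  exists Y'; split; [exact: hY's|split].
  + move=> f fi.
    suff H : forall y, (forall j, y j \in Y' (f j)) ->
        exists2 z, (forall j, z j \in Y (f j)) & orient y = orient z.
      move=> y y' hy hy'; have [z hz ->] := H y hy; have [z' hz' ->] := H y' hy'.
      exact: (hYst f fi z z' hz hz').
    move=> y hy.
    have yX : forall j, y j \in X (f j) by move=> j; apply: (fsubsetP (hY's _)).
    case: (pselect (exists j0, f j0 = ord0)) => [[j0 hj0]|nj]; last first.
      exists y => // j; move: (hy j); rewrite /Y'; case: eqP => // h.
      by case: nj; exists j.
    move: (hy j0); rewrite /Y' hj0 eqxx inE => /andP[xX /fset0Pn [w /fsetIP [cC cY]]].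
    exists (upd y j0 w).
      move=> j; rewrite /upd; case: eqP => [->|/eqP ne]; first by rewrite hj0.
      by move: (hy j); rewrite /Y' (fj0 _ _ _ fi hj0 ne).
    apply/esym/hT => //.
    * exact: injF fi yX.
    * by move=> j; apply: inU (yX j).
  + move=> i; rewrite /Y'; case: eqP => [->|/eqP ne]; last first.
      by move: (hYc i); rewrite /Xn (negPf ne).
    have Y0X : Y0 `<=` X ord0 by apply/fsubsetP => x; rewrite inE => /andP[].
    have sub : Y ord0 `<=` \big[fsetU/fset0]_(x <- Y0) C x.
      apply/fsubsetP => y yY.
      move: (fsubsetP (hYs ord0) y yY); rewrite /Xn eqxx => /bigfcupP [x /andP[xX _] yx].
      apply/bigfcupP; exists x => //; rewrite /Y0 andbT !inE /=; apply/andP; split => //.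
      by apply/fset0Pn; exists y; apply/fsetIP.
    have := fsubset_leq_card sub; rewrite cardU // => hle.
    have := hYc ord0; rewrite /Xn eqxx /X1n cardU ?fsubset_refl // => h.
    have hn0 : 0 < (n%:R : R) by rewrite ltr0n.
    rewrite -(ler_pM2l hn0) mulrCA -natrM.
    by apply: (le_trans h); rewrite -natrM ler_nat.
Qed.
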